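(* Let $n\geq3$, let $o_1,o_2$ be two non-parallel $\mathcal{O}_n$-directions, write $o_1=\alpha+\beta\zeta_n$, $o_2=\gamma+\delta\zeta_n$ with $\alpha,\beta,\gamma,\delta\in\mathbb{Z}[\zeta_n+\bar\zeta_n]$, and let $M_{\{o_1,o_2\}}=\operatorname{lin}_{\mathbb{Z}[\zeta_n+\bar\zeta_n]}\left(\left\{\frac{o_1}{\alpha\delta-\beta\gamma},\frac{o_2}{\alpha\delta-\beta\gamma}\right\}\right)$. Then $\mathcal{O}_n$ is a subgroup of $M_{\{o_1,o_2\}}$ and the subgroup index $[M_{\{o_1,o_2\}}:\mathcal{O}_n]$ is finite. Hence there are $c\in\mathbb{N}$ and $t_1,\dots,t_c\in M_{\{o_1,o_2\}}$, where one may take $t_1=0$, such that $M_{\{o_1,o_2\}}=\dot{\bigcup}_{i=1}^c(t_i+\mathcal{O}_n)$ (disjoint union), and consequently every subset $G\subset M_{\{o_1,o_2\}}$ satisfies $G=\dot{\bigcup}_{i=1}^c\bigl(G\cap(t_i+\mathcal{O}_n)\bigr)$.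
   Context: $\zeta_n$ is a primitive $n$th root of unity in $\mathbb{C}$, $\bar\zeta_n$ its complex conjugate, $\mathcal{O}_n=\mathbb{Z}[\zeta_n]$. An $\mathcal{O}_n$-direction is an element of $\mathcal{O}_n\setminus\{0\}$. The coefficients $\alpha,\beta,\gamma,\delta$ are uniquely determined, and $\alpha\delta-\beta\gamma\ne0$. $\operatorname{lin}_R(S)$ is the set of $R$-linear combinations of elements of $S$. *)

(* Defs.v *)
From HB Require Import structures.
From mathcomp Require Import all_boot all_order all_algebra all_field.
Set Implicit Arguments. Unset Strict Implicit. Unset Printing Implicit Defensive.
Import Order.TTheory GRing.Theory Num.Theory.
Local Open Scope ring_scope.

(* We work in algC, the algebraic complex numbers (all numbers involved are
   algebraic).  z plays the role of the primitive n-th root of unity zeta_n. *)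

(* O_n = Z[z] : values at z of polynomials with integer coefficients. *)
Definition inO (z x : algC) : Prop :=
  exists p : {poly int}, x = (map_poly intr p).[z].

Definition inZr (z x : algC) : Prop :=
  exists p : {poly int}, x = (map_poly intr p).[z + z^*].

Definition parallel (o1 o2 : algC) : Prop :=
  exists r : algC, r \is Num.real /\ o1 = r * o2.

Definition inM (z o1 o2 D x : algC) : Prop :=
  exists a b : algC, [/\ inZr z a, inZr z b & x = a * (o1 / D) + b * (o2 / D)].

(* Main.v *)
Require Import Defs.
From HB Require Import structures.
From mathcomp Require Import all_boot all_order all_algebra all_field.
From mathcomp Require Import ring.
From Stdlib Require Import Classical.
Import Order.TTheory GRing.Theory Num.Theory.
Local Open Scope ring_scope.
Set Implicit Arguments.

Definition inP (w x : algC) : Prop := exists p : {poly int}, x = (map_poly intr p).[w].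

Lemma inP_ind (w : algC) (S : algC -> Prop) :
  (forall c : int, S c%:~R) -> (forall x (c : int), S x -> S (x * w + c%:~R)) ->
  forall x, inP w x -> S x.
Proof.
move=> H0 HS x [p ->]; elim/poly_ind: p => [|p c IH].
  by rewrite map_poly0 horner0; have := H0 0.
rewrite rmorphD rmorphM /= map_polyX map_polyC hornerD hornerMX hornerC /=.
exact: HS.
Qed.

Lemma inP_int w (c : int) : inP w c%:~R.
Proof. by exists c%:P; rewrite map_polyC hornerC. Qed.

Lemma inP_0 w : inP w 0.
Proof. by have := inP_int w 0. Qed.

Lemma inP_X w : inP w w.
Proof. by exists 'X; rewrite map_polyX hornerX. Qed.

Lemma inP_add w x y : inP w x -> inP w y -> inP w (x + y).
Proof. by move=> [p ->] [q ->]; exists (p + q); rewrite rmorphD hornerD. Qed.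

Lemma inP_opp w x : inP w x -> inP w (- x).
Proof. by move=> [p ->]; exists (- p); rewrite rmorphN hornerN. Qed.

Lemma inP_sub w x y : inP w x -> inP w y -> inP w (x - y).
Proof. by move=> hx hy; apply: inP_add => //; apply: inP_opp. Qed.

Lemma inP_mul w x y : inP w x -> inP w y -> inP w (x * y).
Proof. by move=> [p ->] [q ->]; exists (p * q); rewrite rmorphM hornerM. Qed.

Lemma inP_trans w w' x : inP w w' -> inP w' x -> inP w x.
Proof.
move=> hw; apply: inP_ind; first exact: inP_int.
by move=> y c hy; apply: inP_add; [apply: inP_mul|apply: inP_int].
Qed.

Lemma inP_sum w n (F : 'I_n -> algC) : (forall i, inP w (F i)) -> inP w (\sum_(i < n) F i).
Proof.
move=> h; apply: (big_ind (inP w)); [exact: inP_0|exact: inP_add|move=> i _; exact: h].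
Qed.

Lemma strip (D : algC) (p : {poly int}) : D != 0 -> p != 0 ->
  (map_poly intr p).[D] = 0 -> exists m : int, m != 0 /\ inP D (m%:~R / D).
Proof.
move=> D0; elim/poly_ind: p => [|p c IH]; first by rewrite eqxx.
have [->|c0] := eqVneq c 0.
  rewrite polyC0 addr0 => pn0.
  rewrite rmorphM /= map_polyX hornerMX => /eqP; rewrite mulf_eq0 (negbTE D0) orbF => /eqP h.
  by apply: IH h; apply: contraNneq pn0 => ->; rewrite mul0r.
move=> pn0; rewrite rmorphD rmorphM /= map_polyX map_polyC hornerD hornerMX hornerC /=.
move=> /eqP; rewrite addr_eq0 => /eqP h; exists c; split => //.
have -> : c%:~R / D = - (map_poly intr p).[D].
  by apply: (mulIf D0); rewrite mulNr h opprK divfK.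
by apply: inP_opp; exists p.
Qed.


Section Sel.
Variables (R : algC -> algC -> Prop) (P : algC -> Prop).
Hypothesis Rsym : forall a b, R a b -> R b a.
Hypothesis Rtr : forall a b c, R a b -> R b c -> R a c.
Hypothesis P0 : P 0.

Lemma select (L : seq algC) : exists L' : seq algC,
  [/\ (0 < size L')%N, nth 0 L' 0 = 0,
      (forall i, (i < size L')%N -> P (nth 0 L' i)),
      (forall i j, (i < size L')%N -> (j < size L')%N -> R (nth 0 L' i) (nth 0 L' j) -> i = j) &
      (forall x, x \in L -> forall y, P y -> R x y -> exists2 i, (i < size L')%N & R x (nth 0 L' i))].
Proof.
elim: L => [|a L [L' [s0 h0 hP hd hc]]].
  exists [:: 0]; split => //.
  - by case => [|i] //=; rewrite ltnS ltn0.
  - by case => [|i] [|j] //=; rewrite ltnS ltn0.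
case: (classic (exists y, P y /\ R a y /\ forall i, (i < size L')%N -> ~ R y (nth 0 L' i))).
  move=> [y [Py [Ray Hy]]].
  exists (rcons L' y); rewrite size_rcons; split.
  - by [].
  - by rewrite nth_rcons s0.
  - move=> i; rewrite ltnS leq_eqVlt nth_rcons => /orP[/eqP->|hi]; first by rewrite ltnn eqxx.
    by rewrite hi; apply: hP.
  - move=> i j; rewrite !ltnS !nth_rcons => hi hj.
    move: hi hj; rewrite leq_eqVlt => /orP[/eqP->|hi]; rewrite leq_eqVlt => /orP[/eqP->|hj]; rewrite ?ltnn ?eqxx ?hi ?hj.
    + by [].
    + by move=> /(Hy _ hj).
    + by move=> /Rsym /(Hy _ hi).
    + exact: hd.
  - move=> x; rewrite inE => /orP[/eqP->|hx] y' Py' Rxy.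
      by exists (size L') => //; rewrite nth_rcons ltnn eqxx.
    have [i hi Ri] := hc x hx y' Py' Rxy.
    by exists i; [apply: ltnW|rewrite nth_rcons hi].
move=> Hn; exists L'; split => // x; rewrite inE => /orP[/eqP->|hx] y Py Rxy; last exact: hc hx y Py Rxy.
apply: NNPP => Hno; apply: Hn; exists y; split => //; split => // i hi Ryi.
by apply: Hno; exists i => //; apply: Rtr Rxy Ryi.
Qed.
End Sel.

Unset Implicit Arguments.

Theorem lemma5p5 (n : nat) (z : algC) (o1 o2 al be ga de : algC) :
  (3 <= n)%N -> n.-primitive_root z ->
  inO z o1 -> o1 != 0 -> inO z o2 -> o2 != 0 -> ~ parallel o1 o2 ->
  inZr z al -> inZr z be -> inZr z ga -> inZr z de ->
  o1 = al + be * z -> o2 = ga + de * z ->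
  let D := al * de - be * ga in
  (forall x, inO z x -> inM z o1 o2 D x) /\
  exists c : nat, exists t : 'I_c.+1 -> algC,
    [/\ (forall i, inM z o1 o2 D (t i)),
        t ord0 = 0,
        (forall i j, inO z (t i - t j) -> i = j),
        (forall x, inM z o1 o2 D x -> exists i, inO z (x - t i)) &
        (forall G : algC -> Prop, (forall x, G x -> inM z o1 o2 D x) ->
           forall x, G x <->
             (exists i, G x /\ inO z (x - t i)) /\
             (forall i j, G x -> inO z (x - t i) -> inO z (x - t j) -> i = j))].
Proof.
move=> n3 prim Oo1 o1n0 Oo2 o2n0 npar Zal Zbe Zga Zde E1 E2 D.
have n0 : (0 < n)%N by apply: leq_trans n3.
have zn : z ^+ n = 1 := prim_expr_order prim.
have z0 : z != 0.
  apply/eqP => z0; move: zn; rewrite z0 expr0n gtn_eqF //= => /eqP; by rewrite eq_sym oner_eq0.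
have nz1 : `|z| = 1.
  by apply/eqP; rewrite -(pexpr_eq1 n0) ?normr_ge0 // -normrX zn normr1.
have zc : z * z^* = 1 by rewrite -normCK nz1 expr1n.
have zconj : z^* = z ^+ n.-1.
  by apply: (mulfI z0); rewrite zc -exprS prednK // zn.
set w := z + z^*.
have hwO : inP z w.
  rewrite /w zconj; apply: inP_add; first exact: inP_X.
  by exists 'X^(n.-1); rewrite map_polyXn hornerXn.
have ZrO : forall x, inZr z x -> inO z x by move=> x hx; exact: (inP_trans hwO hx).
have wreal : w \is Num.real.
  by apply/CrealP; rewrite /w rmorphD /= conjCK addrC.
have Zreal : forall x, inZr z x -> x \is Num.real.
  apply: (@inP_ind _ (fun x => x \is Num.real)) => [c|y c hy]; first exact: realz.
  by apply: realD; [apply: realM|apply: realz].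
have OZr : forall x, inO z x -> exists a b, [/\ inZr z a, inZr z b & x = a + b * z].
  apply: inP_ind => [c|y c [a [b [ha hb ->]]]].
    exists c%:~R, 0; split; [exact: inP_int|exact: inP_0|by rewrite mul0r addr0].
  exists (c%:~R - b), (a + b * w); split.
  - by apply: inP_sub => //; exact: inP_int.
  - by apply: inP_add => //; apply: inP_mul => //; exact: inP_X.
  - have z2 : z * z = w * z - 1 by rewrite /w mulrDl [z^* * z]mulrC zc addrK.
    rewrite mulrDl -mulrA z2; ring.
have Dn0 : D != 0.
  apply/eqP => hD; apply: npar.
  have hD' : al * de = be * ga by apply/eqP; rewrite -subr_eq0; apply/eqP.
  have [g0|g0] := eqVneq ga 0.
    have d0 : de != 0 by apply: contraNneq o2n0 => d0; rewrite E2 g0 d0 mul0r addr0.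
    move: hD'; rewrite g0 mulr0 => /eqP; rewrite mulf_eq0 (negbTE d0) orbF => /eqP a0.
    exists (be / de); split; first by apply: realM; [apply: Zreal|rewrite realV; apply: Zreal].
    by rewrite E1 E2 a0 g0 !add0r mulrA divfK.
  exists (al / ga); split; first by apply: realM; [apply: Zreal|rewrite realV; apply: Zreal].
  have e : al / ga * de = be by rewrite mulrAC hD' mulfK.
  by rewrite E1 E2 mulrDr divfK // mulrA e.
split.
  move=> x /OZr [a [b [ha hb ->]]].
  exists (a * de - b * ga), (b * al - a * be); split.
  - by apply: inP_sub; apply: inP_mul.
  - by apply: inP_sub; apply: inP_mul.
  - by rewrite E1 E2; move: Dn0; rewrite /D => Dn0; field.
have DO : inO z D by apply: inP_sub; apply: inP_mul; apply: ZrO.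
have OAint : forall x, inO z x -> x \in Aint.
  apply: (@inP_ind _ (fun x => x \in Aint)) => [c|y c hy]; first exact: Aint_int.
  apply: rpredD; last exact: Aint_int.
  by apply: rpredM => //; exact: Aint_prim_root prim.
have DA : minCpoly D \is a polyOver Num.int := OAint _ DO.
have [pz hpz] := floorpP DA.
have pz0 : pz != 0.
  have : minCpoly D != 0 by rewrite minCpoly_eq0.
  by rewrite hpz; apply: contraNneq => ->; rewrite map_poly0.
have rz : (map_poly intr pz).[D] = 0 by have := root_minCpoly D; rewrite hpz => /eqP.
have [m [m0 hm]] := strip D pz Dn0 pz0 rz.
have mO : inO z (m%:~R / D) := inP_trans DO hm.
have [N' hN] : exists N' : nat, inO z (N'.+1%:R / D).
  case: m m0 mO {hm} => [k|k] m0 mO.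
    by case: k m0 mO => [//|k] _ mO; exists k.
  exists k; have := inP_opp mO; by rewrite NegzE rmorphN /= mulNr opprK.
set N := N'.+1.
have N0 : (N%:R : algC) != 0 by rewrite pnatr_eq0.
have NM : forall x, inM z o1 o2 D x -> inO z (N%:R * x).
  move=> x [a [b [ha hb ->]]].
  have -> : N%:R * (a * (o1 / D) + b * (o2 / D)) = a * o1 * (N%:R / D) + b * o2 * (N%:R / D).
    by rewrite /D; field.
  by apply: inP_add; apply: inP_mul => //; apply: inP_mul => //; apply: ZrO.
have zkO : forall k, inO z (z ^+ k) by move=> k; exists 'X^k; rewrite map_polyXn hornerXn.
have Rep : forall y, inO z y -> exists c : 'I_n -> int, y = \sum_(k < n) (c k)%:~R * z ^+ k.
  move=> y [p ->].
  pose q : {poly int} := 'X^n - 1%:P.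
  have qm : q \is monic := monicXnsubC 1 n0.
  have qz : (map_poly intr q).[z] = 0.
    rewrite rmorphB /= map_polyXn map_polyC hornerD hornerN hornerXn hornerC zn; exact: subrr.
  have -> : p = p %/ q * q + p %% q by apply: Pdiv.IdomainMonic.divp_eq.
  rewrite rmorphD rmorphM hornerD hornerM /= qz mulr0 add0r.
  have hs : (size (map_poly (intr : int -> algC) (p %% q)) <= n)%N.
    rewrite size_map_inj_poly; last exact: rmorph0.
      have sq : size q = n.+1 := size_XnsubC _ n0.
      by rewrite -ltnS -sq; apply: ltn_modpN0; exact: monic_neq0.
    exact: intr_inj.
  exists (fun k => (p %% q)`_k); rewrite (horner_coef_wide _ hs).
  by apply: eq_bigr => k _; rewrite coef_map.
pose s (f : {ffun 'I_n -> 'I_N}) : algC := \sum_(k < n) ((f k : nat)%:R / N%:R) * z ^+ k.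
pose L := [seq s f | f <- enum {ffun 'I_n -> 'I_N}].
have Rsym : forall a b, inO z (a - b) -> inO z (b - a).
  by move=> a b h; rewrite -opprB; apply: inP_opp.
have Rtr : forall a b c, inO z (a - b) -> inO z (b - c) -> inO z (a - c).
  move=> a b c h1 h2; have -> : a - c = (a - b) + (b - c) by rewrite addrA subrK.
  exact: inP_add.
have P0 : inM z o1 o2 D 0.
  by exists 0, 0; split; [exact: inP_0|exact: inP_0|rewrite !mul0r addr0].
have [L' [s0 h0 hP hd hc]] := select (fun a b => inO z (a - b)) (inM z o1 o2 D) Rsym Rtr P0 L.
have Cov : forall x, inM z o1 o2 D x -> exists2 i, (i < size L')%N & inO z (x - nth 0 L' i).
  move=> x hx; have [c hc'] := Rep _ (NM x hx).
  pose f : {ffun 'I_n -> 'I_N} := [ffun k => inord (absz (c k %% N)%Z)].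
  have fk : forall k, ((f k : nat)%:R : algC) = ((c k %% N)%Z)%:~R.
    move=> k; rewrite ffunE inordK.
      by rewrite natr_absz ger0_norm // modz_ge0.
    by rewrite -ltz_nat gez0_abs ?modz_ge0 // ltz_pmod.
  have key : forall ci : int,
      ((ci %% N)%Z%:~R / N%:R - N%:R^-1 * ci%:~R : algC) = (- (ci %/ N)%Z)%:~R.
    move=> ci; have e : (ci%:~R : algC) = (ci %/ N)%Z%:~R * N%:R + (ci %% N)%Z%:~R.
      by rewrite [in LHS](divz_eq ci N) intrD intrM.
    rewrite e; field; exact: N0.
  have sfL : s f \in L by apply: map_f; rewrite mem_enum.
  have Rsx : inO z (s f - x).
    have ex : x = N%:R^-1 * (N%:R * x) by rewrite mulKf.
    rewrite ex hc' mulr_sumr /s -sumrB; apply: inP_sum => k.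
    have -> : (f k : nat)%:R / N%:R * z ^+ k - N%:R^-1 * ((c k)%:~R * z ^+ k)
        = (- (c k %/ N)%Z)%:~R * z ^+ k.
      by rewrite fk mulrA -mulrBl key.
    by apply: inP_mul; [exact: inP_int|exact: zkO].
  have [i hi Ri] := hc (s f) sfL x hx Rsx.
  exists i => //.
  have -> : x - nth 0 L' i = (s f - nth 0 L' i) - (s f - x) by ring.
  exact: inP_sub.
pose c := (size L').-1.
have sz : c.+1 = size L' := prednK s0.
exists c, (fun i : 'I_c.+1 => nth 0 L' i).
have Ri : forall i : 'I_c.+1, (i < size L')%N by move=> i; rewrite -sz.
split.
- by move=> i; apply: hP (Ri i).
- exact: h0.
- by move=> i j hij; apply: val_inj; apply: hd (Ri i) (Ri j) hij.
- move=> x hx; have [i hi Rxi] := Cov x hx.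
  by exists (inord i); rewrite inordK ?sz.
- move=> G HG x; split.
    move=> Gx; split.
      have [i hi Rxi] := Cov x (HG x Gx).
      by exists (inord i); rewrite inordK ?sz.
    move=> i j _ h1 h2; apply: val_inj; apply: hd (Ri i) (Ri j) _.
    have -> : nth 0 L' i - nth 0 L' j = (x - nth 0 L' j) - (x - nth 0 L' i) by ring.
    exact: inP_sub.
  by move=> [[i [Gx _]] _].
Qed.
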